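(* Let $\Sigma=(\{x_1,x_2\},\{F_1,F_2\})$ be an LP seed of rank $2$ with $\hat F_1=F_1$ and $\hat F_2=F_2$, and let $x'_2=F_2/x_2$. Then $$R[x_1,x_2^{\pm1}]\cap R[x_1^{\pm1},x_2,x'_2]=R[x_1,x_2,x'_2].$$
   Context: $R$ is a unique factorization domain containing $\mathbb{Z}$ and $\mathcal{F}$ is the field of rational functions in $2$ variables over $\mathrm{Frac}(R)$. An LP seed of rank $2$ is a pair $(\{x_1,x_2\},\{F_1,F_2\})$ where $\{x_1,x_2\}$ is a transcendence basis of $\mathcal{F}$ over $\mathrm{Frac}(R)$ and $F_1,F_2$ are irreducible polynomials in $R[x_1,x_2]$, neither divisible by $x_1$ or $x_2$, with $F_1$ not involving $x_1$ and $F_2$ not involving $x_2$. The exchange Laurent polynomial is $\hat F_j=F_j/x_k^{a}$ ($\{j,k\}=\{1,2\}$), with $a\in\mathbb{Z}_{\ge0}$ maximal such that $F_k^{a}$ divides $F_j|_{x_k\leftarrow F_k/x'_k}$ in $R[(x'_k)^{-1}]$ (for $F_j$ regarded in the remaining variables). All rings are subrings of $\mathcal{F}$. *)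

(* Defs.v *)
From HB Require Import structures.
From mathcomp Require Import all_boot all_order all_algebra.
From mathcomp Require Import fraction.
Set Implicit Arguments. Unset Strict Implicit. Unset Printing Implicit Defensive.
Import Order.TTheory GRing.Theory Num.Theory.
Local Open Scope ring_scope.

Definition rdvd (S : comPzRingType) (a b : S) : Prop := exists c : S, b = c * a.

Definition irreducible_el (S : comUnitRingType) (x : S) : Prop :=
  [/\ x != 0, x \isn't a GRing.unit &
      forall a b : S, x = a * b -> a \is a GRing.unit \/ b \is a GRing.unit].

Definition prime_el (S : comUnitRingType) (x : S) : Prop :=
  [/\ x != 0, x \isn't a GRing.unit &
      forall a b : S, rdvd x (a * b) -> rdvd x a \/ rdvd x b].

Definition is_UFD (R : idomainType) : Prop :=
  (forall x : R, x != 0 -> x \isn't a GRing.unit ->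
     exists s : seq R, (forall p, p \in s -> irreducible_el p) /\ x = \prod_(p <- s) p)
  /\ (forall p : R, irreducible_el p -> prime_el p).

Definition contains_Z (R : idomainType) : Prop := forall n : int, n%:~R = 0 :> R -> n = 0.

Section Ambient.
Variable R : idomainType.
Definition FracR := {fraction R}.
Definition Ffield := {fraction {poly {poly FracR}}}.

Definition iK (k : FracR) : Ffield := tofrac (polyC (polyC k)).
Definition iR (r : R) : Ffield := iK (tofrac r).

(* evaluation of P = sum_j q_j(X1) X2^j at (a, b) with coefficient map f *)
Definition eval2 (S : nzRingType) (f : S -> Ffield) (P : {poly {poly S}}) (a b : Ffield)
  : Ffield := (map_poly (fun q : {poly S} => (map_poly f q).[a]) P).[b].

Inductive subalg (S : nzRingType) (f : S -> Ffield) (gens : seq Ffield) : Ffield -> Prop :=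
  | subalg_coef s : subalg f gens (f s)
  | subalg_gen g : g \in gens -> subalg f gens g
  | subalg_add u v : subalg f gens u -> subalg f gens v -> subalg f gens (u + v)
  | subalg_mul u v : subalg f gens u -> subalg f gens v -> subalg f gens (u * v).

Definition transc_basis (x1 x2 : Ffield) : Prop :=
  (forall P : {poly {poly FracR}}, eval2 iK P x1 x2 = 0 -> P = 0)
  /\ (forall z : Ffield, exists p : {poly Ffield},
        [/\ p != 0, forall i, subalg iK [:: x1; x2] p`_i & root p z]).
End Ambient.

(* ---------- polynomials in R[x1, x2] ----------
   P : {poly {poly R}} represents sum_j P_j(x1) x2^j
   (inner variable = x1, outer variable = x2). *)
Section Polys.
Variable R : idomainType.
Definition X1 : {poly {poly R}} := ('X)%:P.
Definition X2 : {poly {poly R}} := 'X.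
Definition not_involving_x1 (P : {poly {poly R}}) : Prop := forall j : nat, (size (nth 0%R (P : seq _) j) <= 1)%N.
Definition not_involving_x2 (P : {poly {poly R}}) : Prop := (size P <= 1)%N.
(* F1 in R[x2] seen as a univariate polynomial in x2 *)
Definition as_poly_x2 (P : {poly {poly R}}) : {poly R} := \poly_(j < size P) (P`_j)`_0.
(* F2 in R[x1] seen as a univariate polynomial in x1 *)
Definition as_poly_x1 (P : {poly {poly R}}) : {poly R} := P`_0.

(* For F_j in R[x_l] (l the remaining variable) and
   F_k in R[x_l], the substitution x_k <- F_k / x'_k turns F_j (a polynomial
   in x_k) into an element of R[x_l][y], y = (x'_k)^{-1}:
     sub = F_j(F_k * y).
   exch_exp fj fk a  <->  a is the maximal natural number such that
   F_k^a divides sub in R[x_l, y]. *)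
Definition exch_sub (fj fk : {poly R}) : {poly {poly R}} :=
  (map_poly (fun c : R => (c%:P)%:P) fj).[fk%:P * 'X].
Definition exch_exp (fj fk : {poly R}) (a : nat) : Prop :=
  rdvd (fk%:P ^+ a) (exch_sub fj fk)
  /\ forall b : nat, rdvd (fk%:P ^+ b) (exch_sub fj fk) -> (b <= a)%N.
End Polys.

Definition LP_seed (R : idomainType) (x1 x2 : Ffield R) (F1 F2 : {poly {poly R}}) : Prop :=
  [/\ transc_basis x1 x2,
      irreducible_el F1 /\ irreducible_el F2,
      ~ rdvd (X1 R) F1 /\ ~ rdvd (X2 R) F1,
      ~ rdvd (X1 R) F2 /\ ~ rdvd (X2 R) F2 &
      not_involving_x1 F1 /\ not_involving_x2 F2].

(* Main.v *)
Require Import Defs.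
From HB Require Import structures.
From mathcomp Require Import all_boot all_order all_algebra.
From mathcomp Require Import fraction.
From mathcomp Require Import zify ring.
Set Implicit Arguments. Unset Strict Implicit. Unset Printing Implicit Defensive.
Import GRing.Theory.
Local Open Scope ring_scope.

Section S.
Variable R : idomainType.

Lemma iR_zmod : zmod_morphism (@iR R).
Proof. move=> a b; rewrite /iR /iK. rewrite !tofracB. rewrite !polyCB. by rewrite tofracB. Qed.
Lemma iR_mon : monoid_morphism (@iR R).
Proof. split; rewrite /iR /iK. by rewrite tofrac1 tofrac1.
move=> a b; by rewrite !tofracM !polyCM tofracM. Qed.
HB.instance Definition _ := GRing.isZmodMorphism.Build _ _ (@iR R) iR_zmod.
HB.instance Definition _ := GRing.isMonoidMorphism.Build _ _ (@iR R) iR_mon.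

Lemma iK0 : @iK R 0 = 0.
Proof. rewrite /iK polyC0. exact: tofrac0. Qed.

Variables x1 x2 : Ffield R.
Definition ev (P : {poly {poly R}}) : Ffield R := eval2 (@iR R) P x1 x2.
Definition evm := horner_eval x2 \o map_poly (horner_eval x1 \o map_poly (@iR R)).
Lemma evE P : ev P = evm P. Proof. by []. Qed.
Lemma evD P Q : ev (P + Q) = ev P + ev Q. Proof. rewrite !evE. apply: rmorphD. Qed.
Lemma evB P Q : ev (P - Q) = ev P - ev Q. Proof. rewrite !evE. apply: rmorphB. Qed.
Lemma evM P Q : ev (P * Q) = ev P * ev Q. Proof. rewrite !evE. apply: rmorphM. Qed.
Lemma evXk P k : ev (P ^+ k) = ev P ^+ k. Proof. rewrite !evE. apply: rmorphXn. Qed.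
Lemma ev_sum n (F : 'I_n -> _) : ev (\sum_(i < n) F i) = \sum_(i < n) ev (F i).
Proof. rewrite !evE. apply: rmorph_sum. Qed.
Lemma evX1 : ev (X1 R) = x1.
Proof. by rewrite evE /evm /= map_polyC /= !horner_evalE hornerC map_polyX hornerX. Qed.
Lemma evX2 : ev (X2 R) = x2.
Proof. by rewrite evE /evm /= map_polyX horner_evalE hornerX. Qed.
Lemma evC r : ev (r%:P%:P) = iR r.
Proof. by rewrite evE /evm /= map_polyC /= !horner_evalE hornerC map_polyC hornerC. Qed.
Lemma evXn P k : ev (P * 'X^k) = ev P * x2 ^+ k.
Proof. by rewrite evM evXk -evX2. Qed.
Lemma ev0 : ev 0 = 0. Proof. rewrite evE. exact: rmorph0. Qed.

Lemma ev_bridge P : ev P = eval2 (@iK R) (map_poly (map_poly (@tofrac R)) P) x1 x2.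
Proof.
rewrite /ev /eval2 -map_poly_comp_id0; last by rewrite map_poly0 horner0.
apply: (congr1 (fun p => p.[x2])); apply: eq_map_poly => q /=.
rewrite -map_poly_comp_id0; last exact: iK0.
apply: (congr1 (fun p => p.[x1])); apply: eq_map_poly => r.
by rewrite /iR /=.
Qed.

Lemma ev_inj : transc_basis x1 x2 -> forall P, ev P = 0 -> P = 0.
Proof.
move=> [hi _] P; rewrite ev_bridge => /hi.
have tinj : injective (@tofrac R).
  by move=> a b /eqP; rewrite tofrac_eq => /eqP.
have minj : injective (map_poly (@tofrac R)).
  apply: map_inj_poly; [exact: tinj | exact: tofrac0].
move=> h; apply: (map_inj_poly minj (map_poly0 _)).
by rewrite h map_poly0.
Qed.

Lemma subalg0 gens : subalg (@iR R) gens 0.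
Proof. by rewrite -(rmorph0 (@iR R)); apply: subalg_coef. Qed.
Lemma subalg1 gens : subalg (@iR R) gens 1.
Proof. by rewrite -(rmorph1 (@iR R)); apply: subalg_coef. Qed.
Lemma subalgX gens u k : subalg (@iR R) gens u -> subalg (@iR R) gens (u ^+ k).
Proof.
move=> h; elim: k => [|k ih]; first by rewrite expr0; apply: subalg1.
by rewrite exprS; apply: subalg_mul.
Qed.
Lemma subalg_sum gens n (F : 'I_n -> Ffield R) :
  (forall i, subalg (@iR R) gens (F i)) -> subalg (@iR R) gens (\sum_(i < n) F i).
Proof.
move=> h; apply: (big_ind (subalg (@iR R) gens)) => //.
  exact: subalg0.
by move=> u v; apply: subalg_add.
Qed.

Lemma evC_in gens (q : {poly R}) : x1 \in gens -> subalg (@iR R) gens (ev q%:P).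
Proof.
move=> h1; elim/poly_ind: q => [|q a ih]; first by rewrite ev0; apply: subalg0.
rewrite polyCD polyCM evD evM -/(X1 R) evX1 evC.
by apply: subalg_add; [apply: subalg_mul => //; apply: subalg_gen|apply: subalg_coef].
Qed.

Lemma ev_in gens P : x1 \in gens -> x2 \in gens -> subalg (@iR R) gens (ev P).
Proof.
move=> h1 h2; elim/poly_ind: P => [|P q ih]; first by rewrite ev0; apply: subalg0.
rewrite evD evM -/(X2 R) evX2.
by apply: subalg_add; [apply: subalg_mul => //; apply: subalg_gen|apply: evC_in].
Qed.

Lemma ev_expand P : ev P = \sum_(i < size P) ev (P`_i)%:P * x2 ^+ i.
Proof.
rewrite -{1}[P]coefK poly_def ev_sum; apply: eq_bigr => i _.
by rewrite -mul_polyC evM -/(X2 R) evXk evX2.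
Qed.

Variable c : {poly R}.
Definition dv (e : nat) (p : {poly R}) := exists q, p = q * c ^+ e.
Lemma dv0 p : dv 0 p. Proof. by exists p; rewrite expr0 mulr1. Qed.
Lemma dv_0 e : dv e 0. Proof. by exists 0; rewrite mul0r. Qed.
Lemma dvD e p q : dv e p -> dv e q -> dv e (p + q).
Proof. by move=> [a ->] [b ->]; exists (a + b); rewrite mulrDl. Qed.
Lemma dv_sum e n (F : 'I_n -> {poly R}) : (forall i, dv e (F i)) -> dv e (\sum_(i < n) F i).
Proof.
move=> h; apply: (big_ind (dv e)) => //; [exact: dv_0 | by move=> u v; apply: dvD].
Qed.
Lemma dvM e e' p q : dv e p -> dv e' q -> dv (e + e') (p * q).
Proof. by move=> [a ->] [b ->]; exists (a * b); rewrite exprD; ring. Qed.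
Lemma dv_le e e' p : (e' <= e)%N -> dv e p -> dv e' p.
Proof.
move=> le [a ->]; exists (a * c ^+ (e - e')).
by rewrite -mulrA -exprD subnK.
Qed.
Lemma dvX e q : c.[0] != 0 -> dv e ('X * q) -> dv e q.
Proof.
move=> c0 [d hd].
have : root d 0.
  apply/eqP; move: (congr1 (fun p => p.[0]) hd).
  rewrite hornerM hornerX mul0r hornerM horner_exp => /esym/eqP.
  by rewrite mulf_eq0 expf_eq0 (negbTE c0) andbF orbF => /eqP.
case/factor_theorem => d' hd'.
exists d'; apply: (@mulfI _ 'X); first by rewrite polyX_eq0.
by rewrite hd hd' subr0; ring.
Qed.

Definition good M P u := u * x2 ^+ M = ev P /\ forall i, dv (M - i) P`_i.
Definition Cp u := exists M P, good M P u.

Lemma good_shift M P u k : good M P u -> good (M + k) (P * 'X^k) u.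
Proof.
move=> [h1 h2]; split; first by rewrite exprD mulrA h1 evXn.
move=> i; rewrite coefMXn; case: ltnP => hi; first exact: dv_0.
apply: (@dv_le (M - (i - k))); last exact: h2. lia.
Qed.
Lemma Cp_add u v : Cp u -> Cp v -> Cp (u + v).
Proof.
move=> [M [P hP]] [N [Q hQ]].
have [h1 h2] := good_shift N hP; have [h3 h4] := good_shift M hQ.
exists (M + N)%N, (P * 'X^N + Q * 'X^M); split.
  by rewrite mulrDl h1 evD -h3 (addnC N M).
by move=> i; rewrite coefD; apply: dvD; [apply: h2|rewrite (addnC M N); apply: h4].
Qed.
Lemma Cp_mul u v : Cp u -> Cp v -> Cp (u * v).
Proof.
move=> [M [P [h1 h2]]] [N [Q [h3 h4]]].
exists (M + N)%N, (P * Q); split.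
  by rewrite evM -h1 -h3 exprD; ring.
move=> i; rewrite coefM; apply: dv_sum => j.
apply: (@dv_le (M - j + (N - (i - j)))%N); last exact: dvM.
have := ltn_ord j; lia.
Qed.

Definition x2' := ev (c%:P) / x2.
Definition Sg := [:: x1; x2; x2'].

Lemma S_Cp : x2 != 0 -> forall u, subalg (@iR R) Sg u -> Cp u.
Proof.
move=> hx2 u; elim => [s|g|a b _ ha _ hb|a b _ ha _ hb].
- exists 0%N, (s%:P%:P); split; first by rewrite expr0 mulr1 evC.
  by move=> i; rewrite sub0n; apply: dv0.
- rewrite !inE => /or3P [/eqP->|/eqP->|/eqP->].
  + exists 0%N, (X1 R); split; first by rewrite expr0 mulr1 evX1.
    by move=> i; rewrite sub0n; apply: dv0.
  + exists 0%N, (X2 R); split; first by rewrite expr0 mulr1 evX2.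
    by move=> i; rewrite sub0n; apply: dv0.
  + exists 1%N, (c%:P); split; first by rewrite expr1 /x2' divfK.
    move=> i; rewrite coefC; case: eqP => [->|_]; last exact: dv_0.
    by exists 1; rewrite expr1 mul1r.
- exact: Cp_add.
- exact: Cp_mul.
Qed.

Lemma Cp_S : x2 != 0 -> forall u, Cp u -> subalg (@iR R) Sg u.
Proof.
move=> hx2 u [M [P [h1 h2]]].
have hxM : x2 ^+ M != 0 := expf_neq0 _ hx2.
have -> : u = ev P / x2 ^+ M by rewrite -h1 mulfK.
rewrite ev_expand mulr_suml; apply: subalg_sum => i.
have [q hq] := h2 i; rewrite hq polyCM rmorphXn /= evM evXk.
have g1 : x1 \in Sg by rewrite !inE eqxx.
have g2 : x2 \in Sg by rewrite !inE eqxx orbT.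
have g3 : x2' \in Sg by rewrite !inE eqxx !orbT.
case: (leqP M i) => hi.
  have -> : ev q%:P * ev c%:P ^+ (M - i) * x2 ^+ i / x2 ^+ M = ev q%:P * x2 ^+ (i - M).
    have e1 : (M - i = 0)%N by lia.
    rewrite e1 expr0 mulr1 -{1}(subnKC hi) exprD (mulrC (x2 ^+ M)) mulrA.
    exact: (mulfK hxM).
  by apply: subalg_mul; [apply: evC_in g1 | apply: subalgX; apply: subalg_gen g2].
have -> : ev q%:P * ev c%:P ^+ (M - i) * x2 ^+ i / x2 ^+ M = ev q%:P * x2' ^+ (M - i).
  have [k ek] : exists k, M = (i + k)%N by exists (M - i)%N; lia.
  have hxi : x2 ^+ i != 0 := expf_neq0 _ hx2.
  rewrite /x2' expr_div_n ek addKn exprD invfM mulrA (mulfK hxi).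
  by rewrite mulrA.
by apply: subalg_mul; [apply: evC_in g1 | apply: subalgX; apply: subalg_gen g3].
Qed.

Definition Tg := [:: x1; x2; x2^-1].
Definition Tp w := exists M Q, w * x2 ^+ M = ev Q.

Lemma ev1 : ev 1 = 1. Proof. rewrite evE. exact: rmorph1. Qed.

Lemma Tp_shift M Q w k : w * x2 ^+ M = ev Q -> w * x2 ^+ (M + k) = ev (Q * 'X^k).
Proof. by move=> h; rewrite exprD mulrA h evXn. Qed.

Lemma T_Tp : x2 != 0 -> forall w, subalg (@iR R) Tg w -> Tp w.
Proof.
move=> hx2 w; elim => [s|g|a b _ [M [P ha]] _ [N [Q hb]]|a b _ [M [P ha]] _ [N [Q hb]]].
- by exists 0%N, (s%:P%:P); rewrite expr0 mulr1 evC.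
- rewrite !inE => /or3P [/eqP->|/eqP->|/eqP->].
  + by exists 0%N, (X1 R); rewrite expr0 mulr1 evX1.
  + by exists 0%N, (X2 R); rewrite expr0 mulr1 evX2.
  + exists 1%N, 1; rewrite expr1 ev1; exact: (mulVf hx2).
- exists (M + N)%N, (P * 'X^N + Q * 'X^M).
  by rewrite mulrDl (Tp_shift N ha) evD -(Tp_shift M hb) (addnC N M).
- exists (M + N)%N, (P * Q).
  by rewrite evM -ha -hb exprD; ring.
Qed.

Definition Ug := [:: x1^-1; x1; x2; x2'].

Lemma Uexp : x1 != 0 -> forall z, subalg (@iR R) Ug z -> exists N, subalg (@iR R) Sg (x1 ^+ N * z).
Proof.
move=> hx1 z.
have g1 : x1 \in Sg by rewrite !inE eqxx.
have g2 : x2 \in Sg by rewrite !inE eqxx orbT.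
have g3 : x2' \in Sg by rewrite !inE eqxx !orbT.
elim => [s|g|a b _ [M ha] _ [N hb]|a b _ [M ha] _ [N hb]].
- by exists 0%N; rewrite expr0 mul1r; apply: subalg_coef.
- rewrite !inE => /or4P [/eqP->|/eqP->|/eqP->|/eqP->].
  + exists 1%N; rewrite expr1 (mulfV hx1); exact: subalg1.
  + by exists 0%N; rewrite expr0 mul1r; apply: subalg_gen g1.
  + by exists 0%N; rewrite expr0 mul1r; apply: subalg_gen g2.
  + by exists 0%N; rewrite expr0 mul1r; apply: subalg_gen g3.
- exists (M + N)%N.
  have -> : x1 ^+ (M + N) * (a + b) = x1 ^+ N * (x1 ^+ M * a) + x1 ^+ M * (x1 ^+ N * b).
    by rewrite exprD; ring.
  apply: subalg_add; apply: subalg_mul; try apply: subalgX; try apply: subalg_gen g1.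
    exact: ha.
  exact: hb.
- exists (M + N)%N.
  have -> : x1 ^+ (M + N) * (a * b) = (x1 ^+ M * a) * (x1 ^+ N * b).
    by rewrite exprD; ring.
  exact: subalg_mul.
Qed.

Lemma key : (forall P, ev P = 0 -> P = 0) -> c.[0] != 0 -> x2 != 0 ->
  forall w, Tp w -> subalg (@iR R) Sg (x1 * w) -> subalg (@iR R) Sg w.
Proof.
move=> hinj hc0 hx2 w [K [Q hQ]] hS.
have [M [P hP]] := S_Cp hx2 hS.
have [h1 h2] := good_shift K hP.
have h3 := Tp_shift M hQ; rewrite addnC in h3.
have eP : P * 'X^K = X1 R * (Q * 'X^M).
  apply/eqP; rewrite -subr_eq0; apply/eqP; apply: hinj.
  by rewrite evB (evM (X1 R)) evX1 -h1 -h3 mulrA subrr.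
apply: (Cp_S hx2); exists (M + K)%N, (Q * 'X^M); split; first exact: h3.
move=> i; apply: (dvX hc0).
by rewrite -coefCM -/(X1 R) -eP; apply: h2.
Qed.

Lemma forward : (forall P, ev P = 0 -> P = 0) -> c.[0] != 0 -> x1 != 0 -> x2 != 0 ->
  forall z, subalg (@iR R) Tg z -> subalg (@iR R) Ug z -> subalg (@iR R) Sg z.
Proof.
move=> hinj hc0 hx1 hx2 z hT hU.
have [N hN] := Uexp hx1 hU; clear hU.
elim: N z hT hN => [|N ih] z hT hN; first by rewrite expr0 mul1r in hN.
have t1 : x1 \in Tg by rewrite !inE eqxx.
apply: (key hinj hc0 hx2); first exact: T_Tp.
apply: ih; first by apply: subalg_mul; [apply: subalg_gen t1 | exact: hT].
by rewrite mulrA -exprSr.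
Qed.

Lemma backward : forall z, subalg (@iR R) Sg z -> subalg (@iR R) Tg z /\ subalg (@iR R) Ug z.
Proof.
have t1 : x1 \in Tg by rewrite !inE eqxx.
have t2 : x2 \in Tg by rewrite !inE eqxx orbT.
have t3 : x2^-1 \in Tg by rewrite !inE eqxx !orbT.
have u2 : x1 \in Ug by rewrite !inE eqxx orbT.
have u3 : x2 \in Ug by rewrite !inE eqxx !orbT.
have u4 : x2' \in Ug by rewrite !inE eqxx !orbT.
move=> z; elim => [s|g|a b _ [ha1 ha2] _ [hb1 hb2]|a b _ [ha1 ha2] _ [hb1 hb2]].
- by split; apply: subalg_coef.
- rewrite !inE => /or3P [/eqP->|/eqP->|/eqP->].
  + by split; [apply: subalg_gen t1 | apply: subalg_gen u2].
  + by split; [apply: subalg_gen t2 | apply: subalg_gen u3].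
  + split; last exact: subalg_gen u4.
    by apply: subalg_mul; [apply: evC_in t1 | apply: subalg_gen t3].
- by split; apply: subalg_add; [exact: ha1|exact: hb1|exact: ha2|exact: hb2].
- by split; apply: subalg_mul; [exact: ha1|exact: hb1|exact: ha2|exact: hb2].
Qed.

End S.

Theorem lemma4p4 (R : idomainType) (hUFD : is_UFD R) (hZ : contains_Z R)
  (x1 x2 : Ffield R) (F1 F2 : {poly {poly R}})
  (hseed : LP_seed x1 x2 F1 F2)
  (* \hat F_1 = F_1 : the exchange exponent of F_1 (w.r.t. x_2 <- F_2/x'_2) is 0 *)
  (hF1 : exch_exp (as_poly_x2 F1) (as_poly_x1 F2) 0)
  (* \hat F_2 = F_2 : the exchange exponent of F_2 (w.r.t. x_1 <- F_1/x'_1) is 0 *)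
  (hF2 : exch_exp (as_poly_x1 F2) (as_poly_x2 F1) 0) :
  let x2' := eval2 (@iR R) F2 x1 x2 / x2 in
  forall z : Ffield R,
    (subalg (@iR R) [:: x1; x2; x2^-1] z /\ subalg (@iR R) [:: x1^-1; x1; x2; x2'] z)
    <-> subalg (@iR R) [:: x1; x2; x2'] z.
Proof.
move=> y2 z.
case: hseed => htb _ _ [hX1F2 _] [_ hnx2].
set c := F2`_0.
have eF2 : F2 = c%:P := size1_polyC hnx2.
have hinj := ev_inj htb.
have hx1 : x1 != 0.
  apply/eqP => h; have := hinj (X1 R); rewrite evX1 h => /(_ erefl) /eqP.
  by rewrite /X1 polyC_eq0 polyX_eq0.
have hx2 : x2 != 0.
  apply/eqP => h; have := hinj (X2 R); rewrite evX2 h => /(_ erefl) /eqP.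
  by rewrite /X2 polyX_eq0.
have hc0 : c.[0] != 0.
  apply/negP => /eqP h0.
  have : root c 0 by apply/eqP.
  case/factor_theorem => d hd; apply: hX1F2; exists d%:P.
  by rewrite eF2 hd subr0 polyCM.
have ey : y2 = x2' x1 x2 c by rewrite /y2 eF2.
rewrite ey; split.
  move=> [hT hU]; exact: (forward hinj hc0 hx1 hx2 hT hU).
move=> hS; exact: (backward hS).
Qed.
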